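(* Let $n\ge 1$ and $j\ge 1$ be integers. There are $n$ Bernoulli arms whose means are i.i.d. uniform on $(0,1)$; given the means, each arm has i.i.d. Bernoulli observations with success probability equal to its mean, independent across arms. Let $B_e$ be the event that the arm with the largest mean has failures in all of its first $j$ observations, and let $N_{nb}$ be the number of other arms whose first $j$ observations are all failures. Then $$\mathbb{P}(B_e)=\frac{n!\,j!}{(n+j)!},\qquad \mathbb{E}[N_{nb}]=\frac{n}{j+1}-\frac{n!\,j!}{(n+j)!}.$$ *)

(* Defs.v *)
From HB Require Import structures.
From mathcomp Require Import all_boot all_order all_algebra.
From mathcomp Require Import all_classical all_reals all_analysis.
Set Implicit Arguments. Unset Strict Implicit. Unset Printing Implicit Defensive.
Import Order.TTheory GRing.Theory Num.Theory.
Local Open Scope ring_scope.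
Local Open Scope classical_set_scope.

Section BanditModel.
Variable R : realType.

Definition vcons (n : nat) (x : R) (v : 'I_n -> R) : 'I_n.+1 -> R :=
  fun i => match unlift ord0 i with Some k => v k | None => x end.

(* Integral over the unit cube [0,1]^n with respect to the product of n
   uniform(0,1) laws (= Lebesgue measure on [0,1]), written as an iterated
   integral (equal to the product-measure integral by Tonelli for the
   nonnegative measurable integrands used below). *)
Fixpoint cube_int (n : nat) : (('I_n -> R) -> \bar R) -> \bar R :=
  match n return (('I_n -> R) -> \bar R) -> \bar R with
  | 0 => fun f => f (fun _ => 0)
  | m.+1 => fun f =>
      (\int[@lebesgue_measure R]_(x in `[0%R, 1%R]) cube_int (fun v => f (vcons x v)))%E
  end.

(* Observations: x i k = true iff the k-th observation (k < j) of arm i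
   is a success. *)
Definition obs (n j : nat) := {ffun 'I_n -> {ffun 'I_j -> bool}}.

Definition obs_weight (n j : nat) (mu : 'I_n -> R) (x : obs n j) : R :=
  \prod_(i < n) \prod_(k < j) (if x i k then mu i else 1 - mu i).

(* Expectation of a nonnegative quantity g(means, first j observations)
   under the hierarchical model: means i.i.d. uniform(0,1), observations
   conditionally i.i.d. Bernoulli(mean). *)
Definition bandit_expect (n j : nat) (g : ('I_n -> R) -> obs n j -> R) : \bar R :=
  cube_int (fun mu => (\sum_(x : obs n j) obs_weight mu x * g mu x)%:E).

Definition bandit_prob (n j : nat) (E : ('I_n -> R) -> obs n j -> bool) : \bar R :=
  bandit_expect (fun mu x => (E mu x)%:R).

(* The arm with the largest mean (ties, a null event, broken by
   [pick], i.e. the smallest index among maximizers). *)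
Definition best_arm (n : nat) (mu : 'I_n -> R) : option 'I_n :=
  [pick i | [forall k, mu k <= mu i]].

Definition all_fail (n j : nat) (x : obs n j) (i : 'I_n) : bool :=
  [forall k, ~~ x i k].

Definition Be (n j : nat) (mu : 'I_n -> R) (x : obs n j) : bool :=
  if best_arm mu is Some i then all_fail x i else false.

Definition Nnb (n j : nat) (mu : 'I_n -> R) (x : obs n j) : nat :=
  #|[set i : 'I_n | (Some i != best_arm mu) && all_fail x i]|.

End BanditModel.

(* Main.v *)
Require Import Defs.
From HB Require Import structures.
From mathcomp Require Import all_boot all_order all_algebra.
From mathcomp Require Import all_classical all_reals all_analysis.
From mathcomp Require Import measurable_realfun.
From mathcomp Require Import beta_distribution.
From mathcomp Require Import ring lra.
Import Order.TTheory GRing.Theory Num.Theory.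
Import numFieldNormedType.Exports.
Local Open Scope ring_scope.
Local Open Scope classical_set_scope.

Section S.
Context {R : realType}.
Notation mu := (@lebesgue_measure R).

Definition Ipoly (p : {poly R}) : {poly R} :=
  \poly_(i < (size p).+1) (if i is k.+1 then p`_k / k.+1%:R else 0).

Lemma derivI p : deriv (Ipoly p) = p.
Proof.
apply/polyP => k; rewrite coef_deriv coef_poly ltnS.
case: ltnP => kp.
  by rewrite -[_ *+ k.+1]mulr_natr divfK // pnatr_eq0.
by rewrite mul0rn nth_default.
Qed.

Lemma ftc_poly (P : {poly R}) a b : a <= b ->
  (\int[mu]_(x in `[a, b]) ((deriv P).[x])%:E = (P.[b] - P.[a])%:E)%E.
Proof.
rewrite le_eqVlt => /predU1P[<-|ab].
  by rewrite set_itv1 integral_set1 subrr.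
rewrite (@continuous_FTC2 _ _ (horner P)) ?EFinB //.
- by apply: continuous_subspaceT => x; exact: continuous_horner.
- split.
  + by move=> x _; exact: derivable_horner.
  + exact/cvg_at_right_filter/continuous_horner.
  + exact/cvg_at_left_filter/continuous_horner.
- by move=> x _; rewrite -derivE.
Qed.


Lemma mfun_split (Q q : {poly R}) (K c : R) (D : set R) :
  measurable_fun D (fun x => (Q.[Num.max c x] + K + q.[x])%:E).
Proof.
apply/measurable_EFinP.
apply: measurable_funD; last exact: measurable_poly.
apply: measurable_funD; last exact: measurable_cst.
have := measurableT_comp (@measurable_poly _ Q setT)
  (@measurable_maxr _ _ _ D (cst c) id (measurable_cst _) (@measurable_id _ _ _)).
by [].
Qed.

Lemma int_split (Q q : {poly R}) (K c : R) : 0 <= c <= 1 ->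
  (\int[mu]_(x in `[0%R, 1%R]) (Q.[Num.max c x] + K + q.[x])%:E =
  (c * Q.[c] + (Ipoly Q).[1] - (Ipoly Q).[c] + K + ((Ipoly q).[1] - (Ipoly q).[0]))%:E)%E.
Proof.
move=> /andP[c0 c1].
rewrite (@itv_bndbnd_setU _ _ _ (BLeft c)) ?bnd_simp //.
rewrite integral_setU //; last 2 first.
- exact: mfun_split.
- apply/disj_setPS => x [] /=; rewrite !in_itv /= => /andP[_ xc] /andP[cx _].
  by move: (lt_le_trans xc cx); rewrite ltxx.
rewrite integral_itv_bndo_bndc; last exact: mfun_split.
transitivity ((\int[mu]_(x in `[0%R, c]) ((deriv ((Q.[c] + K) *: 'X + Ipoly q)).[x])%:E) +
  (\int[mu]_(x in `[c, 1%R]) ((deriv (Ipoly Q + K *: 'X + Ipoly q)).[x])%:E))%E.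
  congr (_ + _)%E; apply: eq_integral => x; rewrite inE /= in_itv /=.
    move=> /andP[_ xc].
    rewrite derivD derivZ derivX derivI !hornerE /=.
    by rewrite max_l.
  move=> /andP[cx _].
  rewrite !derivD derivZ derivX !derivI !hornerE /=.
  by rewrite max_r.
rewrite !ftc_poly // -EFinD; congr EFin.
rewrite !hornerE /=.
ring.
Qed.


Definition maxc n (c : R) (v : 'I_n -> R) := \big[Num.max/c]_(i < n) v i.
Arguments maxc {n}.

Lemma vcons0 n (x : R) (v : 'I_n -> R) : vcons x v ord0 = x.
Proof. by rewrite /vcons unlift_none. Qed.

Lemma vconsS n (x : R) (v : 'I_n -> R) i : vcons x v (lift ord0 i) = v i.
Proof. by rewrite /vcons liftK. Qed.

Lemma maxc_vcons n c x (v : 'I_n -> R) :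
  maxc c (vcons x v) = maxc (Num.max c x) v.
Proof.
rewrite /maxc big_ord_recl vcons0.
under eq_bigr do rewrite vconsS.
elim/big_rec2: _ => [|i y1 y2 _ <-]; first by rewrite maxC.
by rewrite maxCA.
Qed.

Definition cube n (v : 'I_n -> R) := forall i, 0 <= v i <= 1.
Arguments cube {n}.

Lemma vcons_cube n x (v : 'I_n -> R) : 0 <= x <= 1 -> cube v -> cube (vcons x v).
Proof.
move=> hx hv i; rewrite /vcons; case: unliftP => [j _|_] //.
Qed.

Lemma cube_int_eq n (f g : ('I_n -> R) -> \bar R) :
  (forall v, cube v -> f v = g v) -> cube_int f = cube_int g.
Proof.
elim: n f g => [|n IH] f g H /=.
  by apply: H => -[].
apply: eq_integral => x; rewrite inE /= in_itv /= => hx.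
apply: IH => v hv; apply: H; exact: vcons_cube.
Qed.

Fixpoint Qp n (p : {poly R}) : {poly R} :=
  if n is m.+1 then 'X * Qp m p + ((Ipoly (Qp m p)).[1])%:P - Ipoly (Qp m p)
  else p.

Lemma cube_main n : forall (p q : {poly R}) (c d : R) (f : ('I_n -> R) -> \bar R),
  0 <= c <= 1 ->
  (forall v, cube v -> f v = (p.[maxc c v] + \sum_(i < n) q.[v i] + d)%:E) ->
  cube_int f = ((Qp n p).[c] + n%:R * ((Ipoly q).[1] - (Ipoly q).[0]) + d)%:E.
Proof.
elim: n => [|n IH] p q c d f hc H /=.
  by rewrite H; [rewrite /maxc !big_ord0 mul0r addr0 | move=> -[]].
transitivity (\int[mu]_(x in `[0%R, 1%R])
   ((Qp n p).[Num.max c x] + (n%:R * ((Ipoly q).[1] - (Ipoly q).[0]) + d) + q.[x])%:E)%E.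
  apply: eq_integral => x; rewrite inE /= in_itv /= => hx.
  rewrite (IH p q (Num.max c x) (d + q.[x])).
  - by congr EFin; ring.
  - case/andP: hc => c0 c1; case/andP: hx => x0 x1.
    by rewrite le_max c0 /= ge_max c1 x1.
  move=> v hv; rewrite H; last exact: vcons_cube.
  rewrite maxc_vcons big_ord_recl vcons0.
  under eq_bigr do rewrite vconsS.
  by congr EFin; ring.
rewrite int_split //; congr EFin.
rewrite !hornerE /= -addn1 natrD; ring.
Qed.


Lemma Qp_1 n p : (Qp n p).[1] = p.[1].
Proof. by elim: n => //= n IH; rewrite !hornerE IH; ring. Qed.

Lemma Qp_deriv n p : deriv (Qp n p) = 'X^n * deriv p.
Proof.
elim: n => [|n IH] /=; first by rewrite expr0 mul1r.
by rewrite derivB derivD derivC derivM derivX derivI IH exprS; ring.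
Qed.

Lemma Qp0 n a j : (Qp n (a *: ((1 - 'X) ^+ j.+1))).[0] =
  a * j.+1%:R * beta_fun n.+1 j.+1.
Proof.
set p := a *: _.
have h1 : (Qp n p).[1] = 0.
  by rewrite Qp_1 /p !hornerE subrr expr0n mulr0.
have := @ftc_poly (Qp n p) 0 1 ler01.
rewrite h1 Qp_deriv.
have -> : deriv p = (- a * j.+1%:R) *: (1 - 'X) ^+ j.
  rewrite /p derivZ deriv_exp derivB derivC derivX /= sub0r.
  rewrite -!mul_polyC polyCM polyCN polyCMn polyC1; ring.
have -> : (\int[mu]_(x in `[0%R, 1%R])
      (('X^n * ((- a * j.+1%:R) *: (1 - 'X) ^+ j)).[x])%:E)%E =
   ((- a * j.+1%:R) * beta_fun n.+1 j.+1)%:E.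
  transitivity (\int[mu]_(x in `[0%R, 1%R]) ((- a * j.+1%:R)%:E * (XMonemX n j x)%:E))%E.
    apply: eq_integral => x _; rewrite -EFinM !hornerE /XMonemX; congr EFin; rewrite /unstable.onem /=; ring.
  rewrite integralZl //; last exact: integrable_XMonemX.
  by rewrite (EFinM (- a * j.+1%:R)) EFin_beta_fun integral_XMonemX_restrict setTI.
case=> h.
have -> : (Qp n p).[0] = - (0 - (Qp n p).[0]) by ring.
rewrite -h; ring.
Qed.


Lemma sum_bool_w (m : R) j :
  \sum_(y : {ffun 'I_j -> bool}) \prod_(k < j) (if y k then m else 1 - m) = 1.
Proof.
rewrite -(bigA_distr_bigA (fun _ (b : bool) => if b then m else 1 - m)) /=.
by apply: big1 => k _; rewrite big_bool /= addrC subrK.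
Qed.

Lemma sum_fail_w (m : R) j :
  \sum_(y : {ffun 'I_j -> bool})
     (\prod_(k < j) (if y k then m else 1 - m)) * ([forall k, ~~ y k])%:R = (1 - m) ^+ j.
Proof.
rewrite (bigD1 ([ffun => false] : {ffun 'I_j -> bool})) //=.
rewrite [X in _ + X]big1 ?addr0; last first.
  move=> y ny.
  have -> : [forall k, ~~ y k] = false; last by rewrite mulr0.
  apply/negbTE/negP => /forallP H; apply: (negP ny); apply/eqP/ffunP => k.
  by rewrite ffunE; exact/negbTE/H.
have -> : [forall k, ~~ ([ffun => false] : {ffun 'I_j -> bool}) k].
  by apply/forallP => k; rewrite ffunE.
rewrite mulr1 (eq_bigr (fun _ => 1 - m)) => [|k _]; last by rewrite ffunE.
by rewrite prodr_const card_ord.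
Qed.

Lemma sum_obs_fail n j (mu : 'I_n -> R) i :
  \sum_(x : obs n j) obs_weight mu x * (all_fail x i)%:R = (1 - mu i) ^+ j.
Proof.
transitivity (\sum_(x : obs n j) \prod_(i' < n)
   ((\prod_(k < j) (if x i' k then mu i' else 1 - mu i')) *
    (if i' == i then ([forall k, ~~ x i' k])%:R else 1))).
  apply: eq_bigr => x _; rewrite big_split /= /obs_weight.
  rewrite [X in _ = _ * X](bigD1 i) //= eqxx [X in _ = _ * (_ * X)]big1 ?mulr1 //.
  by move=> i' /negbTE ->.
rewrite -(bigA_distr_bigA (fun i' (y : {ffun 'I_j -> bool}) =>
   (\prod_(k < j) (if y k then mu i' else 1 - mu i')) *
    (if i' == i then ([forall k, ~~ y k])%:R else 1))) /=.
rewrite (bigD1 i) //= eqxx sum_fail_w big1 ?mulr1 // => i' /negbTE ->.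
under eq_bigr do rewrite mulr1.
exact: sum_bool_w.
Qed.

Lemma best_max n (mu : 'I_n.+1 -> R) : cube mu ->
  exists b, best_arm mu = Some b /\ mu b = maxc 0 mu.
Proof.
move=> hmu; rewrite /best_arm; case: pickP => [b /forallP Hb | H].
  exists b; split => //; apply/eqP; rewrite eq_le; apply/andP; split.
    exact: le_bigmax.
  apply: bigmax_le => [|i _]; [by case/andP: (hmu b) | exact: Hb].
exfalso.
case: (@arg_maxP _ _ _ ord0 xpredT mu isT) => i _ Hi.
have : [forall k, mu k <= mu i] by apply/forallP => k; exact: Hi.
by rewrite H.
Qed.


Lemma Ipoly0 : Ipoly 0 = 0.
Proof.
apply/polyP => k; rewrite coef_poly coef0.
by case: ifP => // _; case: k => // k; rewrite coef0 mul0r.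
Qed.

Lemma Iq_val j : (Ipoly ((1 - 'X) ^+ j)).[1] - (Ipoly ((1 - 'X) ^+ j)).[0] =
  beta_fun 1 j.+1.
Proof.
apply: EFin_inj.
rewrite -(@ftc_poly (Ipoly ((1 - 'X) ^+ j)) 0 1 ler01) derivI.
rewrite EFin_beta_fun integral_XMonemX_restrict setTI.
apply: eq_integral => x _; congr EFin.
by rewrite /XMonemX /= expr0 mul1r !hornerE /unstable.onem.
Qed.

End S.
Arguments maxc {R n}.
Arguments cube {R n}.
Arguments best_max {R n mu}.

Local Close Scope classical_set_scope.

Theorem mainTheorem12 (R : realType) (n j : nat) (hn : (1 <= n)%N) (hj : (1 <= j)%N) :
  bandit_prob (@Be R n j) = ((n`! * j`!)%:R / (n + j)`!%:R)%:E /\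
  bandit_expect (fun mu x => (@Nnb R n j mu x)%:R)
    = (n%:R / j.+1%:R - (n`! * j`!)%:R / (n + j)`!%:R)%:E.
Proof.
case: n hn => // n _; case: j hj => // j _.
have c01 : (0 : R) <= (0 : R) <= (1 : R) by apply/andP; split; [exact: lexx | exact: ler01].
split.
- rewrite /bandit_prob /bandit_expect.
  rewrite (@cube_main R n.+1 (1 *: (1 - 'X) ^+ j.+1) 0 0 0 _ c01); last first.
    move=> mu hmu; have [b [hb hm]] := best_max hmu.
    rewrite /Be hb -hm sum_obs_fail; congr EFin.
    rewrite big1 => [|i _]; last by rewrite horner0.
    by rewrite !hornerE; ring.
  rewrite Qp0 Ipoly0 !horner0 subrr mulr0 !addr0 beta_fun_fact; congr EFin.
  rewrite [j.+1`!]factS addnS !natrM; ring.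
- rewrite /bandit_expect.
  rewrite (@cube_main R n.+1 ((-1) *: (1 - 'X) ^+ j.+1) ((1 - 'X) ^+ j.+1) 0 0 _ c01); last first.
    move=> mu hmu; have [b [hb hm]] := best_max hmu; congr EFin.
    rewrite /Nnb hb.
    rewrite (eq_bigr (fun x => \sum_i obs_weight mu x * ((Some i != Some b)%:R * (all_fail x i)%:R))); last first.
      move=> x _; rewrite -sum1_card natr_sum big_mkcond mulr_sumr; apply: eq_bigr => i _.
      rewrite unfold_in /= asboolb; case: (Some i != Some b); case: (all_fail x i);
        by rewrite /= ?mulr1n ?mulr0n ?mulr1 ?mul1r ?mulr0 ?mul0r.
    rewrite exchange_big.
    rewrite (eq_bigr (fun i => (Some i != Some b)%:R * (1 - mu i) ^+ j.+1)); last first.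
      move=> i _; under eq_bigr do rewrite mulrCA.
      by rewrite -mulr_sumr sum_obs_fail.
    rewrite -hm (bigD1 b) //= [in RHS](bigD1 b) //= eqxx.
    rewrite (eq_bigr (fun i => (1 - mu i) ^+ j.+1)); last first.
      by move=> i hi; rewrite (inj_eq (@Some_inj _)) hi mul1r.
    rewrite [in RHS](eq_bigr (fun i => (1 - mu i) ^+ j.+1)); last first.
      by move=> i _; rewrite !hornerE.
    rewrite !hornerE /=; ring.
  rewrite (Qp0 n.+1 (-1) j) Iq_val beta_fun1Sn beta_fun_fact; congr EFin.
  rewrite [j.+1`!]factS addnS !natrM; ring.
Qed.
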